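(* There exist constants $C,c>0$ such that for every $x\in\mathbb Z_{\ge0}$, all integers $0\le m<k\le n$ and every $u>0$, $$\mathbf P^n_x\Big(\sup_{m\le i\le k}|S_i-S_m|>u\Big)\le C\,e^{-cu^2/(k-m)}.$$ (In particular, with $m=0$, $\mathbf P^n_x(\sup_{0\le i\le k}|S_i-x|>u)\le Ce^{-cu^2/k}$; one can take $c=1/32$.)
   Context: $\mathbf P^n_x$ is the uniform probability measure on the finite set of paths $(s_0,\dots,s_n)\in\mathbb Z_{\ge0}^{n+1}$ with $s_0=x$ and $|s_{i+1}-s_i|=1$ for all $i$ (simple symmetric random walk conditioned to stay non-negative up to time $n$), and $S=(S_i)_{i=0}^n$ is its coordinate process. *)

(* Defs.v *)
From Stdlib Require Import Reals ZArith List.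
Import ListNotations.
Open Scope R_scope.

Fixpoint all_steps (n : nat) : list (list Z) :=
  match n with
  | O => [ [] ]
  | S n' => flat_map (fun s => [ (1%Z :: s); ((-1)%Z :: s) ]) (all_steps n')
  end.

Definition pos (x : Z) (s : list Z) (i : nat) : Z :=
  (x + fold_right Z.add 0%Z (firstn i s))%Z.

Definition nonneg_path (x : Z) (n : nat) (s : list Z) : bool :=
  forallb (fun i => Z.leb 0 (pos x s i)) (seq 0 (S n)).

(* The finite support of P^n_x: paths from x of length n staying >= 0,
   each listed exactly once (encoded by its step sequence). *)
Definition paths (x : Z) (n : nat) : list (list Z) :=
  filter (nonneg_path x n) (all_steps n).

Definition Pn (x : Z) (n : nat) (E : list Z -> bool) : R :=
  INR (length (filter E (paths x n))) / INR (length (paths x n)).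

Definition osc_event (m k : nat) (x : Z) (u : R) (s : list Z) : bool :=
  existsb (fun i => if Rlt_dec u (IZR (Z.abs (pos x s i - pos x s m)))
                    then true else false)
          (seq m (S (k - m))).

(* Main.v *)
Require Import Defs.
From Stdlib Require Import Reals ZArith List Lia Lra.
Import ListNotations.
Import Defs.
Open Scope R_scope.

Definition ssum (l : list (list Z)) (F : list Z -> R) : R :=
  fold_right (fun s acc => F s + acc) 0 l.
Definition A (n : nat) (F : list Z -> R) : R := ssum (all_steps n) F.
Definition indb (b : bool) : R := if b then 1 else 0.

Lemma ssum_app l1 l2 F : ssum (l1 ++ l2) F = ssum l1 F + ssum l2 F.
Proof. induction l1; simpl; [lra|rewrite IHl1; lra]. Qed.

Lemma ssum_flat_map (g : list Z -> list (list Z)) l F :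
  ssum (flat_map g l) F = ssum l (fun s => ssum (g s) F).
Proof. induction l; simpl; [lra|]. rewrite ssum_app, IHl. lra. Qed.

Lemma ssum_ext l F G : (forall s, In s l -> F s = G s) -> ssum l F = ssum l G.
Proof. induction l; simpl; intros H; [lra|].
  rewrite IHl by auto. rewrite H by auto. lra. Qed.

Lemma A_S n F : A (S n) F = A n (fun s => F (1%Z :: s) + F ((-1)%Z :: s)).
Proof. unfold A. simpl. rewrite ssum_flat_map.
  apply ssum_ext. intros s _. simpl. lra. Qed.

Lemma A_0 F : A 0 F = F [].
Proof. unfold A; simpl; lra. Qed.

Lemma ssum_le l F G : (forall s, In s l -> F s <= G s) -> ssum l F <= ssum l G.
Proof. induction l; simpl; intros H; [lra|].
  specialize (IHl (fun s Hs => H s (or_intror Hs))). specialize (H a (or_introl eq_refl)). lra. Qed.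


Lemma ssum_plus l F G : ssum l (fun s => F s + G s) = ssum l F + ssum l G.
Proof. induction l; simpl; [lra|]. rewrite IHl; lra. Qed.

Lemma ssum_scal l c F : ssum l (fun s => c * F s) = c * ssum l F.
Proof. induction l; simpl; [lra|]. rewrite IHl; lra. Qed.

Lemma ssum_minus l F G : ssum l (fun s => F s - G s) = ssum l F - ssum l G.
Proof. induction l; simpl; [lra|]. rewrite IHl; lra. Qed.

Lemma A_le n F G : (forall s, In s (all_steps n) -> F s <= G s) -> A n F <= A n G.
Proof. apply ssum_le. Qed.
Lemma A_ext n F G : (forall s, In s (all_steps n) -> F s = G s) -> A n F = A n G.
Proof. apply ssum_ext. Qed.
Lemma A_plus n F G : A n (fun s => F s + G s) = A n F + A n G.
Proof. apply ssum_plus. Qed.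
Lemma A_minus n F G : A n (fun s => F s - G s) = A n F - A n G.
Proof. apply ssum_minus. Qed.
Lemma A_scal n c F : A n (fun s => c * F s) = c * A n F.
Proof. apply ssum_scal. Qed.
Lemma A_nonneg n F : (forall s, 0 <= F s) -> 0 <= A n F.
Proof. intros H. unfold A. induction (all_steps n); simpl; [lra|]. specialize (H a); lra. Qed.

Lemma A_const n c : A n (fun _ => c) = 2 ^ n * c.
Proof. induction n. rewrite A_0; simpl; lra.
  rewrite A_S. rewrite A_ext with (G := fun _ => 2 * c) by (intros; lra).
  rewrite A_scal, IHn. simpl; lra. Qed.

Lemma in_all_steps n s : In s (all_steps n) ->
  length s = n /\ Forall (fun a => a = 1%Z \/ a = (-1)%Z) s.
Proof. revert s; induction n; simpl; intros s H.
  - destruct H as [<-|[]]. split; auto.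
  - apply in_flat_map in H. destruct H as [s' [Hs' H]].
    destruct (IHn s' Hs') as [Hl Hf].
    simpl in H. destruct H as [<-|[<-|[]]]; simpl; split; auto.
Qed.

Lemma A_split t j F : A (t + j) F = A t (fun p => A j (fun q => F (p ++ q))).
Proof. revert F; induction t; intros F.
  - rewrite A_0. simpl. reflexivity.
  - simpl plus. rewrite A_S. rewrite IHt. rewrite A_S.
    apply A_ext; intros p _. rewrite <- A_plus. reflexivity.
Qed.

Definition nsum (l : list nat) (f : nat -> R) : R := fold_right (fun t acc => f t + acc) 0 l.

Lemma A_nsum n l (F : nat -> list Z -> R) :
  A n (fun s => nsum l (fun t => F t s)) = nsum l (fun t => A n (F t)).
Proof. induction l; simpl. rewrite A_const; lra.
  rewrite A_plus, IHl. reflexivity. Qed.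

Lemma nsum_le l f g : (forall t, In t l -> f t <= g t) -> nsum l f <= nsum l g.
Proof. induction l; simpl; intros H; [lra|].
  specialize (IHl (fun s Hs => H s (or_intror Hs))). specialize (H a (or_introl eq_refl)). lra. Qed.
Lemma nsum_scal l c f : nsum l (fun t => c * f t) = c * nsum l f.
Proof. induction l; simpl; [lra|]. rewrite IHl; lra. Qed.
Lemma nsum_app l1 l2 f : nsum (l1 ++ l2) f = nsum l1 f + nsum l2 f.
Proof. induction l1; simpl; [lra|rewrite IHl1; lra]. Qed.

Lemma length_filter_ssum (P : list Z -> bool) l :
  INR (length (filter P l)) = ssum l (fun s => indb (P s)).
Proof. induction l; simpl; auto. destruct (P a); simpl length; rewrite ?S_INR, IHl; unfold indb; lra. Qed.

Local Open Scope bool_scope.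

Definition psum (l : list Z) : Z := fold_right Z.add 0%Z l.

Lemma pos_eq x s i : pos x s i = (x + psum (firstn i s))%Z.
Proof. reflexivity. Qed.

Lemma nonneg_iff x n s : nonneg_path x n s = true <-> forall i, (i <= n)%nat -> (0 <= pos x s i)%Z.
Proof. unfold nonneg_path. rewrite forallb_forall. split.
  - intros H i Hi. specialize (H i). apply Z.leb_le. apply H. apply in_seq. lia.
  - intros H i Hi. apply in_seq in Hi. apply Z.leb_le. apply H. lia. Qed.

Lemma psum_app a b : psum (a ++ b) = (psum a + psum b)%Z.
Proof. induction a; simpl; lia. Qed.

Lemma pos_app_le x p q i : (i <= length p)%nat -> pos x (p ++ q) i = pos x p i.
Proof. intros H. unfold pos. rewrite firstn_app.
  replace (i - length p)%nat with 0%nat by lia. simpl. rewrite app_nil_r. reflexivity. Qed.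

Lemma pos_app_ge x p q i : pos x (p ++ q) (length p + i) = pos (pos x p (length p)) q i.
Proof. unfold pos. rewrite firstn_app. replace (length p + i - length p)%nat with i by lia.
  rewrite (firstn_all2 (n:=length p + i)). rewrite firstn_all. rewrite !psum_app. unfold psum. lia. lia. Qed.

Lemma nonneg_app x p q j : nonneg_path x (length p + j) (p ++ q) = 
  nonneg_path x (length p) p && nonneg_path (pos x p (length p)) j q.
Proof. apply Bool.eq_iff_eq_true. rewrite Bool.andb_true_iff, !nonneg_iff. split.
  - intros H. split.
    + intros i Hi. rewrite <- (pos_app_le x p q i) by lia. apply H; lia.
    + intros i Hi. rewrite <- pos_app_ge. apply H; lia.
  - intros [H1 H2] i Hi. destruct (Nat.le_gt_cases i (length p)).
    + rewrite pos_app_le by lia. apply H1; lia.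
    + replace i with (length p + (i - length p))%nat by lia. rewrite pos_app_ge. apply H2; lia.
Qed.

Definition W (y : Z) (N : nat) (F : list Z -> R) : R :=
  A N (fun q => indb (nonneg_path y N q) * F q).

Lemma indb_and a b : indb (a && b) = indb a * indb b.
Proof. destruct a, b; unfold indb; simpl; lra. Qed.

Lemma W_markov x t j F : W x (t + j) F =
  A t (fun p => indb (nonneg_path x t p) * W (pos x p t) j (fun q => F (p ++ q))).
Proof. unfold W. rewrite A_split. apply A_ext. intros p Hp.
  destruct (in_all_steps _ _ Hp) as [Hl _]. subst t.
  rewrite <- A_scal. apply A_ext. intros q _. rewrite nonneg_app, indb_and. lra. Qed.

Lemma W_le y N F G : (forall q, In q (all_steps N) -> nonneg_path y N q = true -> F q <= G q) ->
  W y N F <= W y N G.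
Proof. intros H. unfold W. apply A_le. intros q Hq. destruct (nonneg_path y N q) eqn:E;
  unfold indb; [specialize (H q Hq E)|]; lra. Qed.

Lemma W_plus y N F G : W y N (fun q => F q + G q) = W y N F + W y N G.
Proof. unfold W. rewrite <- A_plus. apply A_ext. intros; lra. Qed.
Lemma W_scal y N c F : W y N (fun q => c * F q) = c * W y N F.
Proof. unfold W. rewrite <- A_scal. apply A_ext. intros; lra. Qed.
Lemma W_nonneg y N F : (forall q, 0 <= F q) -> 0 <= W y N F.
Proof. intros H. unfold W. apply A_nonneg. intros q. specialize (H q). unfold indb; destruct nonneg_path; lra. Qed.
Lemma W_nsum y N l (F : nat -> list Z -> R) :
  W y N (fun s => nsum l (fun t => F t s)) = nsum l (fun t => W y N (F t)).
Proof. unfold W. rewrite <- A_nsum. apply A_ext. intros. induction l; simpl; [lra|]. rewrite <- IHl. lra. Qed.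

Lemma nonneg_neg y N q : (y < 0)%Z -> nonneg_path y N q = false.
Proof. intros H. destruct (nonneg_path y N q) eqn:E; auto. rewrite nonneg_iff in E.
  specialize (E 0%nat ltac:(lia)). unfold pos in E. simpl in E. lia. Qed.

Lemma W_neg y N F : (y < 0)%Z -> W y N F = 0.
Proof. intros H. unfold W. unfold A. induction (all_steps N); simpl; auto.
  rewrite IHl, nonneg_neg by auto. unfold indb; lra. Qed.

Definition fcnt (M : nat) (z : Z) : R := W z M (fun _ => 1).

Lemma nonneg_1 z a : nonneg_path z 1 [a] = (Z.leb 0 z && Z.leb 0 (z + a))%bool.
Proof. unfold nonneg_path. simpl. unfold pos. simpl. rewrite !Z.add_0_r, Bool.andb_true_r. reflexivity. Qed.

Lemma W_S z M F : W z (S M) F = indb (Z.leb 0 z) *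
   (W (z+1) M (fun q => F (1%Z :: q)) + W (z-1) M (fun q => F ((-1)%Z :: q))).
Proof. change (S M) with (1 + M)%nat. rewrite W_markov. rewrite A_S, A_0.
  simpl app. rewrite !nonneg_1. unfold pos. simpl.
  replace (z + (1 + 0))%Z with (z+1)%Z by lia.
  replace (z + (-1 + 0))%Z with (z-1)%Z by lia.
  replace (z + -1)%Z with (z-1)%Z by lia.
  destruct (Z.leb_spec 0 z); destruct (Z.leb_spec 0 (z+1)); destruct (Z.leb_spec 0 (z-1)); simpl; unfold indb.
  all: try (rewrite (W_neg (z-1)) by lia); try (rewrite (W_neg (z+1)) by lia); try lra; try lia.
Qed.

Lemma W_0 z F : W z 0 F = indb (Z.leb 0 z) * F [].
Proof. unfold W. rewrite A_0. unfold nonneg_path. simpl. unfold pos; simpl. rewrite Z.add_0_r.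
  destruct (Z.leb 0 z); reflexivity. Qed.

Lemma fc_S M z : fcnt (S M) z = indb (Z.leb 0 z) * (fcnt M (z+1) + fcnt M (z-1)).
Proof. unfold fcnt. apply W_S. Qed.
Lemma fc_0 z : fcnt 0 z = indb (Z.leb 0 z).
Proof. unfold fcnt. rewrite W_0. lra. Qed.
Lemma fc_neg M z : (z < 0)%Z -> fcnt M z = 0.
Proof. intros. unfold fcnt. apply W_neg; auto. Qed.

Definition dinc M z := fcnt M z - fcnt M (z-1).

Lemma d_prop M : forall z, (0 <= z)%Z -> 0 <= dinc M (z+1) <= dinc M z.
Proof. induction M; intros z Hz.
  - unfold dinc. rewrite !fc_0. replace (z+1-1)%Z with z by lia.
    destruct (Z.leb_spec 0 (z+1)); destruct (Z.leb_spec 0 z); destruct (Z.leb_spec 0 (z-1)); unfold indb; try lia; lra.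
  - assert (Hd : forall w, (1 <= w)%Z -> dinc (S M) w = dinc M (w+1) + dinc M (w-1)).
    { intros w Hw. unfold dinc. rewrite !fc_S. replace (w-1+1)%Z with w by lia.
      replace (w - 1 - 1)%Z with (w-2)%Z by lia.
      destruct (Z.leb_spec 0 w); destruct (Z.leb_spec 0 (w-1)); try lia. unfold indb.
      replace (w+1-1)%Z with w by lia. replace (w-1-1)%Z with (w-2)%Z by lia. lra. }
    assert (Hd0 : dinc (S M) 0 = dinc M 1 + dinc M 0).
    { unfold dinc. rewrite (fc_neg (S M) (0-1)) by lia. rewrite fc_S. simpl.
      rewrite (fc_neg M (-1)) by lia. replace (fcnt M (0-1)) with 0 by (symmetry; apply fc_neg; lia).
      unfold indb. lra. }
    rewrite Hd by lia. replace (z+1+1)%Z with (z+2)%Z by lia. replace (z+1-1)%Z with z by lia.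
    destruct (Z.eq_dec z 0).
    + subst. rewrite Hd0. simpl. pose proof (IHM 0%Z ltac:(lia)). pose proof (IHM 1%Z ltac:(lia)).
      simpl in *. lra.
    + rewrite Hd by lia. pose proof (IHM z Hz). pose proof (IHM (z+1)%Z ltac:(lia)).
      pose proof (IHM (z-1)%Z ltac:(lia)). replace (z+1+1)%Z with (z+2)%Z in * by lia.
      replace (z-1+1)%Z with z in * by lia. lra.
Qed.

Lemma fc_nonneg M z : 0 <= fcnt M z.
Proof. unfold fcnt. apply W_nonneg. intros; lra. Qed.

Lemma dinc0 M : dinc M 0 = fcnt M 0.
Proof. unfold dinc. rewrite (fc_neg M (0-1)) by lia. lra. Qed.

Lemma fc_step M z : (0 <= z)%Z -> fcnt M z <= fcnt M (z+1).
Proof. intros Hz. pose proof (d_prop M z Hz). unfold dinc in H. replace (z+1-1)%Z with z in H by lia. lra. Qed.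

Lemma fc_mono_nat M w k : (0 <= w)%Z -> fcnt M w <= fcnt M (w + Z.of_nat k).
Proof. intros Hw. induction k. rewrite Z.add_0_r; lra.
  rewrite Nat2Z.inj_succ. replace (w + Z.succ (Z.of_nat k))%Z with (w + Z.of_nat k + 1)%Z by lia.
  pose proof (fc_step M (w + Z.of_nat k) ltac:(lia)). lra. Qed.

Lemma fc_mono M w z : (0 <= w <= z)%Z -> fcnt M w <= fcnt M z.
Proof. intros H. replace z with (w + Z.of_nat (Z.to_nat (z - w)))%Z by lia. apply fc_mono_nat; lia. Qed.

Lemma fc_ge_d M : forall k : nat, (IZR (Z.of_nat k) + 1) * dinc M (Z.of_nat k + 1) <= fcnt M (Z.of_nat k).
Proof. induction k.
  - simpl. rewrite <- dinc0. pose proof (d_prop M 0 ltac:(lia)). simpl in *. lra.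
  - rewrite Nat2Z.inj_succ. unfold Z.succ.
    pose proof (d_prop M (Z.of_nat k + 1) ltac:(lia)).
    pose proof (d_prop M (Z.of_nat k) ltac:(lia)).
    assert (fcnt M (Z.of_nat k + 1) = fcnt M (Z.of_nat k) + dinc M (Z.of_nat k + 1)).
    { unfold dinc. replace (Z.of_nat k + 1 - 1)%Z with (Z.of_nat k) by lia. lra. }
    rewrite plus_IZR. pose proof (pos_INR k). rewrite <- INR_IZR_INZ in *. nra.
Qed.

Lemma fc_ratio_step M z : (0 <= z)%Z -> fcnt M (z+1) * (IZR z + 1) <= fcnt M z * (IZR z + 2).
Proof. intros Hz. replace z with (Z.of_nat (Z.to_nat z)) by lia.
  pose proof (fc_ge_d M (Z.to_nat z)).
  assert (fcnt M (Z.of_nat (Z.to_nat z) + 1) = fcnt M (Z.of_nat (Z.to_nat z)) + dinc M (Z.of_nat (Z.to_nat z) + 1)).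
  { unfold dinc. replace (Z.of_nat (Z.to_nat z) + 1 - 1)%Z with (Z.of_nat (Z.to_nat z)) by lia. lra. }
  nra. Qed.

Lemma fc_ratio_nat M w k : (0 <= w)%Z ->
  fcnt M (w + Z.of_nat k) * (IZR w + 1) <= fcnt M w * (IZR (w + Z.of_nat k) + 1).
Proof. intros Hw. induction k.
  - rewrite Z.add_0_r. lra.
  - rewrite Nat2Z.inj_succ. replace (w + Z.succ (Z.of_nat k))%Z with (w + Z.of_nat k + 1)%Z by lia.
    pose proof (fc_ratio_step M (w + Z.of_nat k) ltac:(lia)).
    assert (0 <= IZR w) by (apply IZR_le; lia).
    assert (0 <= IZR (w + Z.of_nat k)) by (apply IZR_le; lia).
    pose proof (fc_nonneg M w). pose proof (fc_nonneg M (w + Z.of_nat k + 1)).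
    rewrite plus_IZR. 
    set (a := fcnt M (w + Z.of_nat k + 1)) in *. set (b := fcnt M (w + Z.of_nat k)) in *.
    set (Z0 := IZR (w + Z.of_nat k)) in *.
    (* a (Z0+1) <= b (Z0+2), b (w+1) <= fw (Z0+1) *)
    apply (Rmult_le_reg_r (Z0 + 1)); [lra|]. nra.
Qed.

Lemma fc_ratio M w z : (0 <= w <= z)%Z -> fcnt M z * (IZR w + 1) <= fcnt M w * (IZR z + 1).
Proof. intros H. replace z with (w + Z.of_nat (Z.to_nat (z - w)))%Z by lia. apply fc_ratio_nat; lia. Qed.

Lemma fc_pos M z : (0 <= z)%Z -> 1 <= fcnt M z.
Proof. revert z. induction M; intros z Hz.
  - rewrite fc_0. destruct (Z.leb_spec 0 z); unfold indb; lia || lra.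
  - rewrite fc_S. destruct (Z.leb_spec 0 z); [|lia]. unfold indb.
    pose proof (IHM (z+1)%Z ltac:(lia)). pose proof (fc_nonneg M (z-1)). lra.
Qed.

Definition rle (a b : R) : R := if Rle_dec a b then 1 else 0.

Lemma psum_bound n r : In r (all_steps n) -> (- Z.of_nat n <= psum r <= Z.of_nat n)%Z.
Proof. intros H. apply in_all_steps in H. destruct H as [Hl Hf]. subst n.
  induction Hf; simpl; lia. Qed.

Lemma A_exp L c : A L (fun r => exp (c * IZR (psum r))) = (exp c + exp (- c)) ^ L.
Proof. induction L.
  - rewrite A_0. unfold psum, fold_right. rewrite Rmult_0_r, exp_0. rewrite pow_O. reflexivity.
  - rewrite A_S.
    rewrite A_ext with (G := fun s => (exp c + exp (-c)) * exp (c * IZR (psum s))).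
    + rewrite A_scal, IHL. rewrite <- tech_pow_Rmult. reflexivity.
    + intros s _. change (psum (1%Z :: s)) with (1 + psum s)%Z.
      change (psum ((-1)%Z :: s)) with (-1 + psum s)%Z.
      rewrite !plus_IZR, !Rmult_plus_distr_l, !exp_plus.
      replace (c * IZR 1) with c by (rewrite Rmult_1_r; reflexivity).
      replace (c * IZR (-1)) with (-c) by (change (IZR (-1)) with (-1); ring).
      ring.
Qed.

Lemma exp_le_inv1 l : 0 <= l < 1 -> exp l * (1 - l) <= 1.
Proof. intros H. pose proof (exp_ineq1_le (- l)). rewrite exp_Ropp in H0.
  pose proof (exp_pos l). apply (Rmult_le_reg_r (/ exp l)). apply Rinv_0_lt_compat; lra.
  rewrite Rmult_comm, <- Rmult_assoc, Rinv_l by lra. lra. Qed.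

Lemma cosh_bound l : 0 <= l -> l * l <= 1/2 -> exp l + exp (- l) <= 2 * exp (2 * (l * l)).
Proof. intros H0 H1.
  assert (Hl1 : l < 1) by nra.
  pose proof (exp_le_inv1 l ltac:(lra)) as E1.
  pose proof (exp_ineq1_le l) as E2. rewrite exp_Ropp.
  pose proof (exp_pos l) as E3.
  pose proof (exp_ineq1_le (2 * (l * l))) as E4.
  set (e := exp l) in *. set (g := exp (2 * (l * l))) in *.
  assert (Hinv : / e * (1 + l) <= 1).
  { apply (Rmult_le_reg_l e); [lra|]. rewrite <- Rmult_assoc, Rinv_r by lra. lra. }
  assert (Hi : / e > 0) by (apply Rinv_0_lt_compat; lra).
  set (ie := / e) in *.
  assert (Ha : e * (1 - l * l) <= 1 + l).
  { replace (e * (1 - l * l)) with ((e * (1 - l)) * (1 + l)) by ring.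
    apply Rmult_le_compat_r with (r := 1 + l) in E1; lra. }
  assert (Hb : ie * (1 - l * l) <= 1 - l).
  { replace (ie * (1 - l * l)) with ((ie * (1 + l)) * (1 - l)) by ring.
    apply Rmult_le_compat_r with (r := 1 - l) in Hinv; lra. }
  assert (Hc : 1 <= g * (1 - l * l)).
  { assert ((1 + 2 * (l * l)) * (1 - l * l) <= g * (1 - l * l)) by (apply Rmult_le_compat_r; lra).
    assert (1 <= (1 + 2 * (l * l)) * (1 - l * l)).
    { set (t := l * l) in *. assert (0 <= t) by (unfold t; nra). nra. }
    lra. }
  assert (Hpos : 0 < 1 - l * l) by lra.
  apply (Rmult_le_reg_r (1 - l * l)); [lra|].
  assert (2 <= 2 * g * (1 - l*l)) by lra. lra.
Qed.

Lemma exp_pow x n : exp x ^ n = exp (INR n * x).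
Proof. induction n. simpl. rewrite Rmult_0_l, exp_0; lra.
  rewrite S_INR. simpl. rewrite IHn. rewrite <- exp_plus. f_equal. lra. Qed.

Lemma chernoff_up L a : (1 <= L)%nat -> 0 < a ->
  A L (fun r => rle a (IZR (psum r))) <= 2 ^ L * exp (- (a * a) / (8 * INR L)).
Proof. intros HL Ha. assert (HL' : 1 <= INR L) by (apply (le_INR 1); lia).
  pose proof (pow_lt 2 L ltac:(lra)). pose proof (exp_pos (- (a * a) / (8 * INR L))).
  destruct (Rle_dec a (INR L)) as [Hal|Hal].
  - set (l := a / (4 * INR L)).
    assert (Hl0 : 0 <= l) by (unfold l; apply Rmult_le_pos; [lra|left; apply Rinv_0_lt_compat; lra]).
    assert (Hl1 : l <= 1/4). { unfold l. apply (Rmult_le_reg_r (4 * INR L)); [lra|].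
      unfold Rdiv. rewrite Rmult_assoc, Rinv_l by lra. lra. }
    eapply Rle_trans with (A L (fun r => exp (- (l * a)) * exp (l * IZR (psum r)))).
    { apply A_le. intros r _. unfold rle. destruct Rle_dec.
      - rewrite <- exp_plus. replace 1 with (exp 0) by apply exp_0.
        destruct (Req_dec (- (l * a) + l * IZR (psum r)) 0) as [E|E]. rewrite E; lra.
        left. apply exp_increasing. nra.
      - pose proof (exp_pos (- (l * a))). pose proof (exp_pos (l * IZR (psum r))). nra. }
    rewrite A_scal, A_exp.
    assert ((exp l + exp (- l)) ^ L <= (2 * exp (2 * (l * l))) ^ L).
    { apply pow_incr. split. pose proof (exp_pos l); pose proof (exp_pos (-l)); lra.
      apply cosh_bound; nra. }
    rewrite Rpow_mult_distr, exp_pow in H1.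
    pose proof (exp_pos (- (l * a))).
    eapply Rle_trans. apply Rmult_le_compat_l. lra. exact H1.
    rewrite <- Rmult_assoc, (Rmult_comm (exp _)), Rmult_assoc, <- exp_plus.
    apply Rmult_le_compat_l. lra.
    replace (- (l * a) + INR L * (2 * (l * l))) with (- (a * a) / (8 * INR L)). lra.
    unfold l. field. lra.
  - eapply Rle_trans with (A L (fun _ => 0)).
    + apply A_le. intros r Hr. apply psum_bound in Hr. unfold rle. destruct Rle_dec; [|lra].
      exfalso. apply Hal. eapply Rle_trans. exact r0. rewrite INR_IZR_INZ. apply IZR_le. lia.
    + rewrite A_const. nra.
Qed.

Lemma A_neg L F : A L (fun r => F (map Z.opp r)) = A L F.
Proof. revert F. induction L; intros F. rewrite !A_0. reflexivity.
  rewrite !A_S.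
  transitivity (A L (fun s => (fun s => F ((-1)%Z :: s) + F (1%Z :: s)) (map Z.opp s))).
  apply A_ext; intros; reflexivity.
  rewrite (IHL (fun s => F ((-1)%Z :: s) + F (1%Z :: s))). apply A_ext. intros; lra. Qed.

Lemma psum_opp r : psum (map Z.opp r) = (- psum r)%Z.
Proof. induction r; simpl; lia. Qed.

Lemma chernoff_down L b : (1 <= L)%nat -> 0 < b ->
  A L (fun r => rle (IZR (psum r)) (- b)) <= 2 ^ L * exp (- (b * b) / (8 * INR L)).
Proof. intros HL Hb. rewrite <- A_neg.
  eapply Rle_trans; [|apply (chernoff_up L b HL Hb)].
  right. apply A_ext. intros r _. rewrite psum_opp, opp_IZR. unfold rle.
  destruct Rle_dec; destruct Rle_dec; auto; lra. Qed.

Definition incr (F : list Z -> R) := forall s s', Forall2 Z.le s s' -> F s <= F s'.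

Lemma Forall2_refl s : Forall2 Z.le s s.
Proof. induction s; constructor; auto; lia. Qed.

Lemma harris n : forall F G, incr F -> incr (fun s => - G s) ->
  2 ^ n * A n (fun s => F s * G s) <= A n F * A n G.
Proof. induction n; intros F G HF HG.
  - rewrite !A_0. simpl. lra.
  - rewrite !A_S. rewrite !A_plus.
    assert (HF1 : incr (fun s => F (1%Z :: s))) by (intros s s' H; apply HF; constructor; auto; lia).
    assert (HF0 : incr (fun s => F ((-1)%Z :: s))) by (intros s s' H; apply HF; constructor; auto; lia).
    assert (HG1 : incr (fun s => - G (1%Z :: s))) by (intros s s' H; apply HG; constructor; auto; lia).
    assert (HG0 : incr (fun s => - G ((-1)%Z :: s))) by (intros s s' H; apply HG; constructor; auto; lia).
    pose proof (IHn _ _ HF1 HG1). pose proof (IHn _ _ HF0 HG0).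
    assert (A n (fun s => F ((-1)%Z :: s)) <= A n (fun s => F (1%Z :: s))).
    { apply A_le. intros s _. apply HF. constructor. lia. apply Forall2_refl. }
    assert (A n (fun s => G (1%Z :: s)) <= A n (fun s => G ((-1)%Z :: s))).
    { apply A_le. intros s _. assert (- G ((-1)%Z :: s) <= - G (1%Z :: s)); [|lra].
      apply HG. constructor. lia. apply Forall2_refl. }
    set (a1 := A n (fun s => F (1%Z :: s))) in *. set (a0 := A n (fun s => F ((-1)%Z :: s))) in *.
    set (b1 := A n (fun s => G (1%Z :: s))) in *. set (b0 := A n (fun s => G ((-1)%Z :: s))) in *.
    simpl pow. nra.
Qed.

Lemma psum_firstn_mono s s' i : Forall2 Z.le s s' -> (psum (firstn i s) <= psum (firstn i s'))%Z.
Proof. intros H. revert i. induction H; intros i; destruct i; simpl; try lia.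
  specialize (IHForall2 i). lia. Qed.

Lemma nonneg_incr y N : incr (fun s => indb (nonneg_path y N s)).
Proof. intros s s' H. unfold indb. destruct (nonneg_path y N s) eqn:E1; destruct (nonneg_path y N s') eqn:E2; try lra.
  exfalso. rewrite nonneg_iff in E1. assert (nonneg_path y N s' = true); [|congruence].
  rewrite nonneg_iff. intros i Hi. specialize (E1 i Hi). rewrite pos_eq in *.
  pose proof (psum_firstn_mono s s' i H). lia. Qed.

Lemma firstn_app_len (p q : list Z) : firstn (length p) (p ++ q) = p.
Proof. rewrite firstn_app, Nat.sub_diag. simpl. rewrite app_nil_r. apply firstn_all. Qed.

Lemma Fdown y N L b : (1 <= L <= N)%nat -> 0 < b ->
  W y N (fun q => rle (IZR (psum (firstn L q))) (- b)) <= exp (- (b * b) / (8 * INR L)) * W y N (fun _ => 1).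
Proof. intros HL Hb. unfold W.
  assert (Hh := harris N (fun s => indb (nonneg_path y N s)) (fun q => rle (IZR (psum (firstn L q))) (- b))
     (nonneg_incr y N)).
  assert (Hd : incr (fun s => - rle (IZR (psum (firstn L s))) (- b))).
  { intros s s' H. pose proof (psum_firstn_mono s s' L H). apply IZR_le in H0. unfold rle.
    destruct Rle_dec; destruct Rle_dec; lra. }
  specialize (Hh Hd).
  assert (HA : A N (fun q => rle (IZR (psum (firstn L q))) (- b)) <= 2 ^ N * exp (- (b * b) / (8 * INR L))).
  { replace N with (L + (N - L))%nat by lia. rewrite A_split.
    eapply Rle_trans with (A L (fun p => 2 ^ (N - L) * rle (IZR (psum p)) (- b))).
    - right. apply A_ext. intros p Hp. destruct (in_all_steps _ _ Hp) as [Hl _].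
      rewrite <- A_const. apply A_ext. intros q _. rewrite <- Hl, firstn_app_len. reflexivity.
    - rewrite A_scal. eapply Rle_trans. apply Rmult_le_compat_l. left; apply pow_lt; lra.
      apply chernoff_down; [lia|lra]. rewrite <- Rmult_assoc, <- pow_add. replace (N - L + L)%nat with (L + (N - L))%nat by lia. lra. }
  replace (A N (fun q => indb (nonneg_path y N q) * 1)) with (A N (fun q => indb (nonneg_path y N q))) by (apply A_ext; intros; lra).
  assert (H0 : 0 <= A N (fun s => indb (nonneg_path y N s))) by (apply A_nonneg; intros; unfold indb; destruct nonneg_path; lra).
  pose proof (pow_lt 2 N ltac:(lra)).
  apply (Rmult_le_reg_l (2 ^ N)); [lra|].
  eapply Rle_trans. exact Hh.
  rewrite Rmult_comm. rewrite <- Rmult_assoc. apply Rmult_le_compat_r. auto.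
  rewrite Rmult_comm. rewrite (Rmult_comm (exp _)). exact HA.
Qed.

Lemma psum_cons a s : psum (a :: s) = (a + psum s)%Z.
Proof. reflexivity. Qed.

Lemma nonneg_cons y L a s : indb (nonneg_path y (S L) (a :: s)) = indb (Z.leb 0 y) * indb (nonneg_path (y + a) L s).
Proof. change (S L) with (length [a] + L)%nat. change (a :: s) with ([a] ++ s).
  rewrite nonneg_app. simpl length. rewrite nonneg_1. unfold pos. simpl.
  replace (y + (a + 0))%Z with (y + a)%Z by lia.
  destruct (Z.leb_spec 0 y); destruct (Z.leb_spec 0 (y + a)); simpl; unfold indb; try lra.
  rewrite nonneg_neg by lia. lra. Qed.

Lemma reflection L : forall y (h : Z -> R), (0 <= y)%Z -> (forall z, (z <= -2)%Z -> h z = 0) ->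
  A L (fun r => indb (nonneg_path y L r) * h (y + psum r)%Z) =
  A L (fun r => h (y + psum r)%Z) - A L (fun r => h (- y - 2 + psum r)%Z).
Proof. induction L; intros y h Hy Hh.
  - rewrite !A_0. simpl. rewrite (Hh (- y - 2 + 0)%Z) by lia.
    unfold nonneg_path. simpl. unfold pos. simpl. replace (y + 0)%Z with y by lia.
    destruct (Z.leb_spec 0 y); [|lia]. simpl. unfold indb. lra.
  - rewrite !A_S. rewrite <- A_minus.
    rewrite A_ext with (G := fun s => indb (nonneg_path (y + 1) L s) * h (y + 1 + psum s)%Z
                                    + indb (nonneg_path (y - 1) L s) * h (y - 1 + psum s)%Z).
    2:{ intros s _. rewrite !nonneg_cons. destruct (Z.leb_spec 0 y); [|lia]. unfold indb at 1 3.
        replace (y + -1)%Z with (y - 1)%Z by lia. rewrite ?psum_cons.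
        replace (y + (1 + psum s))%Z with (y + 1 + psum s)%Z by lia.
        replace (y + (-1 + psum s))%Z with (y - 1 + psum s)%Z by lia. lra. }
    rewrite A_plus. rewrite (IHL (y+1)%Z h); [|lia|exact Hh].
    destruct (Z.eq_dec y 0).
    + subst y. rewrite A_ext with (F := fun s => indb (nonneg_path (0 - 1) L s) * h (0 - 1 + psum s)%Z) (G := fun _ => 0).
      2:{ intros. rewrite nonneg_neg by lia. unfold indb; lra. }
      rewrite A_const. rewrite <- !A_minus. rewrite Rmult_0_r, Rplus_0_r.
      apply A_ext. intros s _. rewrite ?psum_cons.
      replace (0 + (1 + psum s))%Z with (0 + 1 + psum s)%Z by lia.
      replace (0 + (-1 + psum s))%Z with (- 0 - 2 + (1 + psum s))%Z by lia.
      replace (- (0 + 1) - 2 + psum s)%Z with (- 0 - 2 + (-1 + psum s))%Z by lia. lra.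
    + rewrite (IHL (y-1)%Z h); [|lia|exact Hh]. rewrite <- !A_minus, <- A_plus.
      apply A_ext. intros s _. rewrite ?psum_cons.
      replace (y + (1 + psum s))%Z with (y + 1 + psum s)%Z by lia.
      replace (y + (-1 + psum s))%Z with (y - 1 + psum s)%Z by lia.
      replace (- y - 2 + (1 + psum s))%Z with (- (y - 1) - 2 + psum s)%Z by lia.
      replace (- y - 2 + (-1 + psum s))%Z with (- (y + 1) - 2 + psum s)%Z by lia. lra.
Qed.

Lemma harmonic L : forall y, (0 <= y)%Z ->
  A L (fun r => indb (nonneg_path y L r) * (IZR (y + psum r) + 1)) = (IZR y + 1) * 2 ^ L.
Proof. induction L; intros y Hy.
  - rewrite A_0. unfold nonneg_path. simpl. unfold pos. simpl. replace (y + 0)%Z with y by lia.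
    destruct (Z.leb_spec 0 y); [|lia]. simpl. unfold indb. lra.
  - rewrite A_S.
    rewrite A_ext with (G := fun s => indb (nonneg_path (y + 1) L s) * (IZR (y + 1 + psum s) + 1)
                                    + indb (nonneg_path (y - 1) L s) * (IZR (y - 1 + psum s) + 1)).
    2:{ intros s _. rewrite !nonneg_cons. destruct (Z.leb_spec 0 y); [|lia]. unfold indb at 1 3.
        replace (y + -1)%Z with (y - 1)%Z by lia. rewrite ?psum_cons.
        replace (y + (1 + psum s))%Z with (y + 1 + psum s)%Z by lia.
        replace (y + (-1 + psum s))%Z with (y - 1 + psum s)%Z by lia. lra. }
    rewrite A_plus, IHL by lia.
    destruct (Z.eq_dec y 0).
    + subst y. rewrite A_ext with (G := fun _ => 0). 2:{ intros. rewrite nonneg_neg by lia. unfold indb; lra. }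
      rewrite A_const. simpl. lra.
    + rewrite IHL by lia. rewrite !plus_IZR, !minus_IZR. simpl. lra.
Qed.

Definition Bc L j := A L (fun r => indb (Z.eqb (psum r) j)).

Lemma Bc_S L j : Bc (S L) j = Bc L (j - 1) + Bc L (j + 1).
Proof. unfold Bc. rewrite A_S, A_plus. f_equal; apply A_ext; intros s _; rewrite ?psum_cons;
  f_equal; apply Bool.eq_iff_eq_true; rewrite !Z.eqb_eq; lia. Qed.

Lemma Bc_0 j : Bc 0 j = indb (Z.eqb 0 j).
Proof. unfold Bc. rewrite A_0. reflexivity. Qed.

Lemma Bc_nonneg L j : 0 <= Bc L j.
Proof. apply A_nonneg. intros; unfold indb; destruct Z.eqb; lra. Qed.

Lemma Bc_sym L : forall j, Bc L (- j) = Bc L j.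
Proof. induction L; intros j.
  - rewrite !Bc_0. f_equal. apply Bool.eq_iff_eq_true; rewrite !Z.eqb_eq; lia.
  - rewrite !Bc_S. replace (- j - 1)%Z with (- (j + 1))%Z by lia. replace (- j + 1)%Z with (- (j - 1))%Z by lia.
    rewrite !IHL. lra. Qed.

Lemma Bc_mono L : forall j, (-1 <= j)%Z -> Bc L (j + 2) <= Bc L j.
Proof. induction L; intros j Hj.
  - rewrite !Bc_0. destruct (Z.eqb_spec 0 (j+2)); destruct (Z.eqb_spec 0 j); unfold indb; try lia; lra.
  - destruct (Z.eq_dec j (-1)).
    + subst. simpl. replace 1%Z with (- (-1))%Z by lia. rewrite Bc_sym. lra.
    + rewrite !Bc_S. replace (j + 2 - 1)%Z with (j + 1)%Z by lia. replace (j + 2 + 1)%Z with ((j + 1) + 2)%Z by lia.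
      pose proof (IHL (j+1)%Z ltac:(lia)). pose proof (IHL (j-1)%Z ltac:(lia)).
      replace (j - 1 + 2)%Z with (j + 1)%Z in H0 by lia. lra.
Qed.

Lemma Bc_chain L j t : (-1 <= j)%Z -> Bc L (j + 2 * Z.of_nat t) <= Bc L j.
Proof. intros Hj. induction t. replace (j + 2 * Z.of_nat 0)%Z with j by lia. lra.
  replace (j + 2 * Z.of_nat (S t))%Z with ((j + 2 * Z.of_nat t) + 2)%Z by lia.
  pose proof (Bc_mono L (j + 2 * Z.of_nat t) ltac:(lia)). lra. Qed.

Definition between (lo hi s : Z) : R := indb (Z.leb lo s) * indb (Z.leb s hi).

Lemma between_count L j t : (-1 <= j - 2 * Z.of_nat t)%Z ->
  (INR t + 1) * Bc L j <= A L (fun r => between (j - 2 * Z.of_nat t) j (psum r)).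
Proof. intros H. induction t.
  - replace (INR 0 + 1) with 1 by (simpl; lra). rewrite Rmult_1_l. unfold Bc. right. apply A_ext. intros r _. unfold between.
    replace (j - 2 * Z.of_nat 0)%Z with j by lia.
    destruct (Z.eqb_spec (psum r) j); destruct (Z.leb_spec j (psum r)); destruct (Z.leb_spec (psum r) j); unfold indb; try lia; lra.
  - rewrite S_INR. specialize (IHt ltac:(lia)).
    pose proof (Bc_chain L (j - 2 * Z.of_nat (S t)) (S t) H).
    replace (j - 2 * Z.of_nat (S t) + 2 * Z.of_nat (S t))%Z with j in H0 by lia.
    assert (A L (fun r => between (j - 2 * Z.of_nat t) j (psum r)) + Bc L (j - 2 * Z.of_nat (S t))
            <= A L (fun r => between (j - 2 * Z.of_nat (S t)) j (psum r))).
    { unfold Bc. rewrite <- A_plus. apply A_le. intros r _. unfold between.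
      destruct (Z.leb_spec (j - 2 * Z.of_nat t) (psum r)); destruct (Z.leb_spec (psum r) j);
      destruct (Z.eqb_spec (psum r) (j - 2 * Z.of_nat (S t))); destruct (Z.leb_spec (j - 2 * Z.of_nat (S t)) (psum r));
      unfold indb; try lia; lra. }
    lra.
Qed.

Lemma jB_bound L j : (1 <= L)%nat -> (1 <= j)%Z ->
  IZR j * Bc L j <= 4 * (2 ^ L * exp (- (IZR j * IZR j) / (32 * INR L))).
Proof. intros HL Hj.
  set (t := Z.to_nat (j / 4)).
  pose proof (Z.div_mod j 4 ltac:(lia)). pose proof (Z.mod_pos_bound j 4 ltac:(lia)).
  assert (Ht : Z.of_nat t = (j / 4)%Z) by (unfold t; rewrite Z2Nat.id; [lia|apply Z.div_pos; lia]).
  pose proof (between_count L j t ltac:(lia)).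
  assert (A L (fun r => between (j - 2 * Z.of_nat t) j (psum r)) <= A L (fun r => rle (IZR j / 2) (IZR (psum r)))).
  { apply A_le. intros r _. unfold between, rle. destruct Rle_dec; destruct (Z.leb_spec (j - 2 * Z.of_nat t) (psum r));
    destruct (Z.leb_spec (psum r) j); unfold indb; try lra.
    exfalso. apply n. assert (Hq : (j <= 2 * (j - 2 * Z.of_nat t))%Z) by lia.
    apply IZR_le in Hq. rewrite mult_IZR in Hq.
    assert (Hr : IZR (j - 2 * Z.of_nat t) <= IZR (psum r)) by (apply IZR_le; lia).
    lra. }
  assert (Hj0 : 0 < IZR j / 2) by (apply IZR_le in Hj; lra).
  pose proof (chernoff_up L (IZR j / 2) HL Hj0) as Hc.
  assert (Ht4 : IZR j <= 4 * (INR t + 1)).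
  { rewrite INR_IZR_INZ, Ht. assert (Hq : (j <= 4 * (j / 4 + 1))%Z) by lia. apply IZR_le in Hq.
    rewrite mult_IZR, plus_IZR in Hq. lra. }
  pose proof (Bc_nonneg L j) as HB.
  replace (- (IZR j / 2 * (IZR j / 2)) / (8 * INR L)) with (- (IZR j * IZR j) / (32 * INR L)) in Hc
    by (field; apply not_0_INR; lia).
  assert (IZR j * Bc L j <= 4 * (INR t + 1) * Bc L j) by (apply Rmult_le_compat_r; lra).
  lra.
Qed.

Lemma exp_le x y : x <= y -> exp x <= exp y.
Proof. intros [H|H]. left; apply exp_increasing; auto. subst; lra. Qed.

Lemma gauss_mono L j b : (1 <= L)%nat -> (1 <= b <= j)%Z ->
  exp (- (IZR j * IZR j) / (32 * INR L)) <= exp (- (IZR b * IZR b) / (32 * INR L)).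
Proof. intros HL Hb. apply exp_le. assert (1 <= INR L) by (apply (le_INR 1); lia).
  assert (IZR b * IZR b <= IZR j * IZR j).
  { assert (1 <= IZR b) by (apply IZR_le; lia). assert (IZR b <= IZR j) by (apply IZR_le; lia). nra. }
  unfold Rdiv. apply Rmult_le_compat_r. left; apply Rinv_0_lt_compat; lra. lra. Qed.

Lemma sum_range L b K : (1 <= L)%nat -> (1 <= b)%Z ->
  A L (fun r => between b (b + Z.of_nat K) (psum r) * IZR (psum r))
  <= (INR K + 1) * (4 * (2 ^ L * exp (- (IZR b * IZR b) / (32 * INR L)))).
Proof. intros HL Hb. induction K.
  - replace (INR 0 + 1) with 1 by (simpl; lra).
    eapply Rle_trans; [|rewrite Rmult_1_l; apply (jB_bound L b HL Hb)].
    right. unfold Bc. rewrite <- A_scal. apply A_ext. intros r _. unfold between.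
    destruct (Z.eqb_spec (psum r) b); destruct (Z.leb_spec b (psum r)); destruct (Z.leb_spec (psum r) (b + Z.of_nat 0));
      unfold indb; try lia; try lra. subst. lra.
  - rewrite S_INR.
    set (j := (b + Z.of_nat (S K))%Z).
    pose proof (jB_bound L j HL ltac:(unfold j; lia)).
    pose proof (gauss_mono L j b HL ltac:(unfold j; lia)).
    assert (A L (fun r => between b j (psum r) * IZR (psum r)) =
            A L (fun r => between b (b + Z.of_nat K) (psum r) * IZR (psum r)) + IZR j * Bc L j).
    { unfold Bc. rewrite <- A_scal, <- A_plus. apply A_ext. intros r _. unfold between.
      destruct (Z.eqb_spec (psum r) j); destruct (Z.leb_spec b (psum r)); destruct (Z.leb_spec (psum r) (b + Z.of_nat K));
      destruct (Z.leb_spec (psum r) j); unfold j in *; unfold indb; try lia; try lra.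
      rewrite e. lra. }
    rewrite H1. pose proof (pow_lt 2 L ltac:(lra)). pose proof (exp_pos (- (IZR j * IZR j) / (32 * INR L))).
    nra.
Qed.

Lemma X_bound L y b : (1 <= L)%nat -> (0 <= y)%Z -> (1 <= b)%Z ->
  A L (fun r => indb (nonneg_path y L r) * (indb (Z.leb b (psum r)) * (IZR (y + psum r) + 1)))
  <= 10 * ((IZR y + 1) * 2 ^ L) * exp (- (IZR b * IZR b) / (32 * INR L)).
Proof. intros HL Hy Hb.
  set (h := fun z => indb (Z.leb (y + b) z) * (IZR z + 1)).
  rewrite A_ext with (G := fun r => indb (nonneg_path y L r) * h (y + psum r)%Z).
  2:{ intros r _. unfold h. replace (Z.leb (y+b) (y+psum r)) with (Z.leb b (psum r)). reflexivity.
       apply Bool.eq_iff_eq_true. rewrite !Z.leb_le. lia. }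
  rewrite reflection; [|lia|]. 2:{ intros z Hz. unfold h. destruct (Z.leb_spec (y+b) z); [lia|]. unfold indb; lra. }
  set (K := Z.to_nat (2 * y + 1)).
  rewrite <- A_minus.
  eapply Rle_trans with (A L (fun r => 2 * (IZR y + 1) * rle (IZR b) (IZR (psum r)) +
                                        between b (b + Z.of_nat K) (psum r) * IZR (psum r))).
  { apply A_le. intros r _. unfold h, rle, between. assert (HK : Z.of_nat K = (2 * y + 1)%Z) by (unfold K; lia).
    rewrite HK. assert (0 <= IZR y) by (apply IZR_le; lia).
    destruct (Z.leb_spec (y + b) (y + psum r)); destruct (Z.leb_spec (y + b) (- y - 2 + psum r));
    destruct Rle_dec as [Hr|Hr]; destruct (Z.leb_spec b (psum r)); destruct (Z.leb_spec (psum r) (b + (2 * y + 1)));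
    unfold indb; rewrite ?plus_IZR, ?minus_IZR, ?opp_IZR in *; try lia.
    all: try (apply IZR_le in H2 || idtac).
    all: try (exfalso; apply Hr; apply IZR_le; lia).
    all: try (assert (IZR b <= IZR (psum r)) as HH by exact Hr; apply le_IZR in HH; lia).
    all: try lra.
    all: try (assert (IZR (b + (2 * y + 1)) < IZR (psum r)) by (apply IZR_lt; lia); rewrite !plus_IZR, mult_IZR in *; simpl in *; lra).
    all: try (assert (IZR b <= IZR (psum r)) by (apply IZR_le; lia); lra).
  }
  rewrite A_plus. rewrite A_scal.
  pose proof (chernoff_up L (IZR b) HL ltac:(apply IZR_lt; lia)) as Hc.
  pose proof (sum_range L b K HL Hb) as Hs.
  assert (HK : INR K + 1 = 2 * (IZR y + 1)).
  { unfold K. rewrite INR_IZR_INZ, Z2Nat.id by lia. rewrite plus_IZR, mult_IZR. simpl. lra. }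
  rewrite HK in Hs.
  assert (exp (- (IZR b * IZR b) / (8 * INR L)) <= exp (- (IZR b * IZR b) / (32 * INR L))).
  { apply exp_le. assert (1 <= INR L) by (apply (le_INR 1); lia). assert (0 <= IZR b * IZR b) by nra.
    unfold Rdiv. rewrite !Ropp_mult_distr_l_reverse. apply Ropp_le_contravar.
    apply Rmult_le_compat_l; auto. apply Rinv_le_contravar; lra. }
  assert (0 <= IZR y) by (apply IZR_le; lia).
  pose proof (pow_lt 2 L ltac:(lra)).
  assert (2 * (IZR y + 1) * A L (fun r => rle (IZR b) (IZR (psum r))) <=
          2 * (IZR y + 1) * (2 ^ L * exp (- (IZR b * IZR b) / (32 * INR L)))).
  { apply Rmult_le_compat_l. lra. eapply Rle_trans. exact Hc. apply Rmult_le_compat_l; lra. }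
  nra.
Qed.

Lemma pos_full y p : pos y p (length p) = (y + psum p)%Z.
Proof. unfold pos. rewrite firstn_all. reflexivity. Qed.

Lemma W_markov_L y L M (F : list Z -> R) (g : list Z -> R) :
  (forall p q, length p = L -> F (p ++ q) = g p) ->
  W y (L + M) F = A L (fun p => indb (nonneg_path y L p) * (g p * fcnt M (y + psum p)%Z)).
Proof. intros H. rewrite W_markov. apply A_ext. intros p Hp. destruct (in_all_steps _ _ Hp) as [Hl _].
  f_equal. subst L. rewrite pos_full. unfold fcnt. rewrite <- W_scal. unfold W. apply A_ext. intros q _.
  rewrite H by auto. lra. Qed.

Lemma nonneg_end y p : nonneg_path y (length p) p = true -> (0 <= y + psum p)%Z.
Proof. intros H. rewrite nonneg_iff in H. specialize (H (length p) (le_n _)). rewrite pos_full in H. lia. Qed.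

Lemma Fup y N L b : (1 <= L <= N)%nat -> (1 <= b)%Z ->
  W y N (fun q => indb (Z.leb b (psum (firstn L q)))) <=
  10 * exp (- (IZR b * IZR b) / (32 * INR L)) * W y N (fun _ => 1).
Proof. intros HL Hb.
  destruct (Z.lt_ge_cases y 0) as [Hy|Hy].
  { rewrite !W_neg by auto. lra. }
  replace N with (L + (N - L))%nat by lia. set (M := (N - L)%nat).
  rewrite (W_markov_L y L M _ (fun p => indb (Z.leb b (psum p)))).
  2:{ intros p q Hl. rewrite <- Hl, firstn_app_len. reflexivity. }
  rewrite (W_markov_L y L M _ (fun p => 1)) by auto.
  set (c0 := (y + b)%Z). set (G := fcnt M c0).
  set (Num := A L (fun p => indb (nonneg_path y L p) * (indb (Z.leb b (psum p)) * fcnt M (y + psum p)%Z))).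
  set (Den := A L (fun p => indb (nonneg_path y L p) * (1 * fcnt M (y + psum p)%Z))).
  set (X := A L (fun r => indb (nonneg_path y L r) * (indb (Z.leb b (psum r)) * (IZR (y + psum r) + 1)))).
  set (Y := A L (fun r => indb (nonneg_path y L r) * ((1 - indb (Z.leb b (psum r))) * (IZR (y + psum r) + 1)))).
  assert (HXY : X + Y = (IZR y + 1) * 2 ^ L).
  { rewrite <- harmonic by auto. unfold X, Y. rewrite <- A_plus. apply A_ext. intros; lra. }
  assert (HP : 0 < IZR c0 + 1) by (assert (0 <= IZR c0) by (apply IZR_le; unfold c0; lia); lra).
  assert (H1 : Num * (IZR c0 + 1) <= G * X).
  { rewrite (Rmult_comm Num). unfold Num, X. rewrite <- A_scal, <- A_scal. apply A_le. intros p Hp.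
    destruct (in_all_steps _ _ Hp) as [Hl _].
    destruct (nonneg_path y L p) eqn:E; [|unfold indb; lra].
    destruct (Z.leb_spec b (psum p)); unfold indb; [|lra].
    pose proof (fc_ratio M c0 (y + psum p)%Z ltac:(unfold c0; lia)). unfold G. lra. }
  assert (H2 : G * Y <= (Den - Num) * (IZR c0 + 1)).
  { rewrite (Rmult_comm (Den - Num)). unfold Num, Den, Y. rewrite <- A_minus. rewrite <- A_scal, <- A_scal. apply A_le. intros p Hp.
    destruct (in_all_steps _ _ Hp) as [Hl _].
    destruct (nonneg_path y L p) eqn:E; [|unfold indb; lra].
    subst L. pose proof (nonneg_end y p E).
    destruct (Z.leb_spec b (psum p)); unfold indb; [lra|].
    pose proof (fc_ratio M (y + psum p)%Z c0 ltac:(unfold c0; lia)). unfold G. lra. }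
  assert (HX0 : 0 <= X).
  { apply A_nonneg. intros r. destruct (nonneg_path y L r); destruct (Z.leb_spec b (psum r)); unfold indb; try lra.
    assert (0 <= IZR (y + psum r)) by (apply IZR_le; lia). lra. }
  assert (HY0 : 0 <= Y).
  { eapply Rle_trans with (A L (fun _ => 0)). rewrite A_const; lra. apply A_le. intros p Hp.
    destruct (in_all_steps _ _ Hp) as [Hl _]. destruct (nonneg_path y L p) eqn:E; [|unfold indb; lra].
    subst L. pose proof (nonneg_end y p E). assert (0 <= IZR (y + psum p)) by (apply IZR_le; lia).
    destruct (Z.leb b (psum p)); unfold indb; lra. }
  assert (HG0 : 0 <= G) by apply fc_nonneg.
  assert (HN0 : 0 <= Num).
  { apply A_nonneg. intros r. pose proof (fc_nonneg M (y + psum r)). destruct (nonneg_path y L r); destruct (Z.leb b (psum r)); unfold indb; try lra. }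
  assert (H3 : Num * (X + Y) <= X * Den).
  { assert (Num * Y * (IZR c0 + 1) <= X * (Den - Num) * (IZR c0 + 1)).
    { assert (Num * (IZR c0 + 1) * Y <= G * X * Y) by (apply Rmult_le_compat_r; auto).
      assert (G * Y * X <= (Den - Num) * (IZR c0 + 1) * X) by (apply Rmult_le_compat_r; auto). nra. }
    apply Rmult_le_reg_r in H; auto. nra. }
  assert (HXb := X_bound L y b ltac:(lia) Hy Hb). fold X in HXb.
  assert (0 < (IZR y + 1) * 2 ^ L).
  { assert (0 <= IZR y) by (apply IZR_le; lia). pose proof (pow_lt 2 L ltac:(lra)). nra. }
  assert (HD0 : 0 <= Den).
  { assert (0 <= G * Y) by (apply Rmult_le_pos; auto).
    assert (0 <= (Den - Num) * (IZR c0 + 1)) by lra.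
    assert (0 <= Den - Num). { apply (Rmult_le_reg_r (IZR c0 + 1)); auto. lra. } lra. }
  rewrite HXY in H3.
  apply (Rmult_le_reg_l ((IZR y + 1) * 2 ^ L)); auto.
  pose proof (exp_pos (- (IZR b * IZR b) / (32 * INR L))).
  assert (X * Den <= 10 * ((IZR y + 1) * 2 ^ L) * exp (- (IZR b * IZR b) / (32 * INR L)) * Den)
    by (apply Rmult_le_compat_r; auto).
  nra.
Qed.

Lemma W_ext_eq y N F G : (forall q, F q = G q) -> W y N F = W y N G.
Proof. intros H. unfold W. apply A_ext. intros. rewrite H. reflexivity. Qed.

Lemma markov_bound x n t eps (Gq Pf F H : list Z -> R) :
  (t <= n)%nat -> 0 <= eps -> (forall p, 0 <= Pf p) ->
  (forall y, W y (n - t) Gq <= eps * W y (n - t) (fun _ => 1)) ->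
  (forall p q, length p = t -> F (p ++ q) = Pf p * Gq q) ->
  (forall p q, length p = t -> H (p ++ q) = Pf p) ->
  W x n F <= eps * W x n H.
Proof. intros Htn He HP HG HF HH. replace n with (t + (n - t))%nat by lia.
  rewrite !W_markov. replace (t + (n - t) - t)%nat with (n - t)%nat in * by lia.
  rewrite <- A_scal. apply A_le. intros p Hp. destruct (in_all_steps _ _ Hp) as [Hl _].
  rewrite W_ext_eq with (G := fun q => Pf p * Gq q) by (intros; apply HF; auto).
  rewrite (W_ext_eq _ _ (fun q => H (p ++ q)) (fun q => Pf p * 1)) by (intros; rewrite HH; auto; lra).
  rewrite !W_scal. specialize (HG (pos x p t)). specialize (HP p).
  destruct (nonneg_path x t p); unfold indb; [|lra].
  pose proof (W_nonneg (pos x p t) (n - t) (fun _ => 1) ltac:(intros; lra)). nra.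
Qed.

Definition firstb (P : nat -> bool) (m t : nat) : bool :=
  (P t && forallb (fun i => negb (P i)) (seq m (t - m)))%bool.

Lemma forallb_neg (P : nat -> bool) l : forallb (fun i => negb (P i)) l = negb (existsb P l).
Proof. induction l; simpl; auto. rewrite IHl. destruct (P a); reflexivity. Qed.

Lemma first_sum P m K : nsum (seq m K) (fun t => indb (firstb P m t)) = indb (existsb P (seq m K)).
Proof. induction K. simpl. unfold indb; lra.
  rewrite seq_S, nsum_app, existsb_app, IHK. simpl. unfold firstb.
  replace (m + K - m)%nat with K by lia. rewrite forallb_neg.
  destruct (existsb P (seq m K)); destruct (P (m + K)%nat); simpl; unfold indb; lra. Qed.

Lemma nsum_nonneg l f : (forall t, 0 <= f t) -> 0 <= nsum l f.
Proof. intros H. induction l; simpl; [lra|]. specialize (H a). lra. Qed.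

Lemma firstb_true P m t : firstb P m t = true -> P t = true.
Proof. unfold firstb. intros H. apply andb_prop in H. tauto. Qed.

Lemma first_bound (P : nat -> bool) m K (aft : nat -> R) (fixd : R) :
  0 <= fixd -> (forall t, 0 <= aft t) ->
  (fixd < 1 -> forall t, P t = true -> 1 <= aft t) ->
  (1 <= fixd \/ fixd < 1) ->
  indb (existsb P (seq m K)) <= fixd + nsum (seq m K) (fun t => indb (firstb P m t) * aft t).
Proof. intros Hf Ha Hh Hd. rewrite <- first_sum. destruct Hd as [Hd|Hd].
  - rewrite first_sum. assert (indb (existsb P (seq m K)) <= 1) by (unfold indb; destruct existsb; lra).
    assert (0 <= nsum (seq m K) (fun t => indb (firstb P m t) * aft t)).
    { apply nsum_nonneg. intros t. specialize (Ha t). unfold indb; destruct firstb; lra. }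
    lra.
  - assert (nsum (seq m K) (fun t => indb (firstb P m t)) <= nsum (seq m K) (fun t => indb (firstb P m t) * aft t)).
    { apply nsum_le. intros t _. destruct (firstb P m t) eqn:E; unfold indb; [|lra].
      apply firstb_true in E. specialize (Hh Hd t E). lra. }
    lra.
Qed.

Lemma firstb_ext (P Q : nat -> bool) m t : (forall i, (i <= t)%nat -> P i = Q i) -> firstb P m t = firstb Q m t.
Proof. intros H. unfold firstb. rewrite H by lia. f_equal.
  assert (Hs : forall i, In i (seq m (t - m)) -> (i <= t)%nat) by (intros i Hi; apply in_seq in Hi; lia).
  induction (seq m (t - m)); simpl; auto. rewrite H by (apply Hs; simpl; auto).
  rewrite IHl; auto. intros; apply Hs; simpl; auto. Qed.

Lemma ssum_filter (P : list Z -> bool) l F : ssum (filter P l) F = ssum l (fun s => indb (P s) * F s).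
Proof. induction l; simpl; auto. destruct (P a); simpl; rewrite IHl; unfold indb; lra. Qed.

Lemma Pn_eq x n E : Pn x n E = W x n (fun s => indb (E s)) / W x n (fun _ => 1).
Proof. unfold Pn, paths. rewrite !length_filter_ssum. rewrite ssum_filter.
  unfold W, A. f_equal. apply ssum_ext; intros; lra. Qed.

Lemma pos_diff x p q t k : length p = t -> (t <= k)%nat ->
  (pos x (p ++ q) k - pos x (p ++ q) t)%Z = psum (firstn (k - t) q).
Proof. intros Hl Hk. replace k with (length p + (k - t))%nat by lia.
  rewrite pos_app_ge, pos_app_le by lia. rewrite Hl. replace (t + (k - t) - t)%nat with (k - t)%nat by lia.
  rewrite (pos_eq (pos x p t) q). lia. Qed.

Lemma up_ge z r : r < IZR z -> (up r <= z)%Z.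
Proof. intros H. destruct (archimed r) as [H1 H2]. destruct (Z.le_gt_cases (up r) z); auto.
  assert (z <= up r - 1)%Z by lia. apply IZR_le in H3. rewrite minus_IZR in H3. simpl in H3. lra. Qed.

Lemma up_gt z r : (up r <= z)%Z -> r < IZR z.
Proof. intros H. destruct (archimed r) as [H1 H2]. apply IZR_le in H. lra. Qed.

Definition Dl (x : Z) (s : list Z) (i m : nat) : Z := (pos x s i - pos x s m)%Z.
Definition PU x m u s (i : nat) : bool := if Rlt_dec u (IZR (Dl x s i m)) then true else false.
Definition PD x m u s (i : nat) : bool := if Rlt_dec (IZR (Dl x s i m)) (- u) then true else false.

Lemma osc_split x m k u s : 0 < u ->
  indb (osc_event m k x u s) <= indb (existsb (PU x m u s) (seq m (S (k - m)))) +
                                indb (existsb (PD x m u s) (seq m (S (k - m)))).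
Proof. intros Hu. unfold osc_event. induction (seq m (S (k - m))); simpl; unfold indb; [lra|].
  unfold PU at 1, PD at 1, Dl.
  destruct (Rlt_dec u (IZR (Z.abs (pos x s a - pos x s m)))) as [H|H].
  - destruct (Z.abs_spec (pos x s a - pos x s m)) as [[H1 H2]|[H1 H2]]; rewrite H2 in H.
    + destruct Rlt_dec; [|lra]. simpl. destruct (existsb (PD x m u s) l); destruct Rlt_dec; simpl; lra.
    + rewrite opp_IZR in H. destruct (Rlt_dec (IZR (pos x s a - pos x s m)) (-u)); [|lra]. simpl.
      destruct (Rlt_dec u _); destruct (existsb (PU x m u s) l); simpl; lra.
  - simpl. fold (indb (existsb (fun i => if Rlt_dec u (IZR (Z.abs (pos x s i - pos x s m))) then true else false) l)) in IHl.
    fold (indb (existsb (PU x m u s) l)) in IHl. fold (indb (existsb (PD x m u s) l)) in IHl.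
    fold (indb (existsb (PU x m u s) l)). fold (indb (existsb (PD x m u s) l)).
    destruct (Rlt_dec u (IZR (pos x s a - pos x s m))); destruct (Rlt_dec (IZR (pos x s a - pos x s m)) (- u));
    simpl; unfold indb in *; destruct (existsb (PU x m u s) l); destruct (existsb (PD x m u s) l); simpl; lra.
Qed.

Lemma exp_L_mono a K L' L : (1 <= L' <= L)%nat -> 0 <= a -> 0 < K ->
  exp (- a / (K * INR L')) <= exp (- a / (K * INR L)).
Proof. intros HL Ha HK. apply exp_le. assert (1 <= INR L') by (apply (le_INR 1); lia).
  assert (INR L' <= INR L) by (apply le_INR; lia).
  unfold Rdiv. rewrite !Ropp_mult_distr_l_reverse. apply Ropp_le_contravar.
  apply Rmult_le_compat_l; auto. apply Rinv_le_contravar. nra. apply Rmult_le_compat_l; lra. Qed.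

Lemma after_bound x n m k t (P : list Z -> nat -> bool) eps (Gq : list Z -> R) (aft : list Z -> nat -> R) :
  (m <= t <= k)%nat -> (k <= n)%nat -> 0 <= eps ->
  (forall p q i, length p = t -> (i <= t)%nat -> P (p ++ q) i = P p i) ->
  (forall y, W y (n - t) Gq <= eps * W y (n - t) (fun _ => 1)) ->
  (forall p q, length p = t -> aft (p ++ q) t = Gq q) ->
  W x n (fun s => indb (firstb (P s) m t) * aft s t) <= eps * W x n (fun s => indb (firstb (P s) m t)).
Proof. intros Ht Hk He HP HG Ha.
  apply (markov_bound x n t eps Gq (fun p => indb (firstb (P p) m t))); auto; try lia.
  - intros p; unfold indb; destruct firstb; lra.
  - intros p q Hl. rewrite Ha by auto. f_equal. f_equal. apply firstb_ext. intros i Hi. apply HP; auto.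
  - intros p q Hl. f_equal. apply firstb_ext. intros i Hi. apply HP; auto.
Qed.

Lemma sum_after x n m K (P : list Z -> nat -> bool) eps (aft : list Z -> nat -> R) :
  0 <= eps ->
  (forall t, In t (seq m K) ->
     W x n (fun s => indb (firstb (P s) m t) * aft s t) <= eps * W x n (fun s => indb (firstb (P s) m t))) ->
  W x n (fun s => nsum (seq m K) (fun t => indb (firstb (P s) m t) * aft s t)) <=
  eps * W x n (fun _ => 1).
Proof. intros He H. rewrite W_nsum. eapply Rle_trans.
  apply nsum_le. exact H. rewrite nsum_scal. apply Rmult_le_compat_l; auto.
  rewrite <- W_nsum. apply W_le. intros q _ _. rewrite first_sum. unfold indb; destruct existsb; lra. Qed.

Lemma PU_app x m u p q t i : length p = t -> (m <= t)%nat -> (i <= t)%nat -> PU x m u (p ++ q) i = PU x m u p i.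
Proof. intros Hl Hm Hi. unfold PU, Dl. rewrite !pos_app_le by lia. reflexivity. Qed.
Lemma PD_app x m u p q t i : length p = t -> (m <= t)%nat -> (i <= t)%nat -> PD x m u (p ++ q) i = PD x m u p i.
Proof. intros Hl Hm Hi. unfold PD, Dl. rewrite !pos_app_le by lia. reflexivity. Qed.

Lemma W_zero y N : W y N (fun _ => 0) = 0.
Proof. unfold W. rewrite A_ext with (G := fun _ => 0) by (intros; lra). rewrite A_const. lra. Qed.

Theorem main_bound x m k n u : (0 <= x)%Z -> (m < k)%nat -> (k <= n)%nat -> 0 < u ->
  Pn x n (osc_event m k x u) <= 22 * exp (- (u * u) / (128 * INR (k - m))).
Proof. intros Hx Hmk Hkn Hu.
  set (L := (k - m)%nat).
  set (bU := up (u / 2)).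
  assert (HbUr : u / 2 < IZR bU) by (apply (archimed (u/2))).
  assert (HbU : (1 <= bU)%Z) by (assert (0 < bU)%Z by (apply lt_0_IZR; lra); lia).
  set (Tot := W x n (fun _ => 1)).
  assert (HT : 1 <= Tot) by (apply (fc_pos n x Hx)).
  assert (HL1 : (1 <= L)%nat) by (unfold L; lia).
  set (E := exp (- (u * u) / (128 * INR L))).
  set (eU := exp (- (IZR bU * IZR bU) / (32 * INR L))).
  set (eD := exp (- (u / 2 * (u / 2)) / (8 * INR L))).
  assert (HeU : eU <= E).
  { apply exp_le. assert (1 <= INR L) by (apply (le_INR 1); lia).
    assert (u * u / 4 <= IZR bU * IZR bU) by nra.
    unfold Rdiv. rewrite !Ropp_mult_distr_l_reverse. apply Ropp_le_contravar.
    replace (u * u * / (128 * INR L)) with ((u * u / 4) * / (32 * INR L)) by (field; lra).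
    apply Rmult_le_compat_r; auto. left; apply Rinv_0_lt_compat; lra. }
  assert (HeD : eD <= E).
  { apply exp_le. assert (1 <= INR L) by (apply (le_INR 1); lia).
    unfold Rdiv. rewrite !Ropp_mult_distr_l_reverse. apply Ropp_le_contravar.
    replace (u * / 2 * (u * / 2) * / (8 * INR L)) with (4 * (u * u * / (128 * INR L))) by (field; lra).
    assert (0 <= u * u * / (128 * INR L)). { apply Rmult_le_pos. nra. left; apply Rinv_0_lt_compat; lra. } lra. }
  assert (HeU0 : 0 <= eU) by (left; apply exp_pos).
  assert (HeD0 : 0 <= eD) by (left; apply exp_pos).
  set (fixU := fun s => indb (Z.leb bU (Dl x s k m))).
  set (aftU := fun s t => rle (IZR (pos x s k - pos x s t)) (- (u / 2))).
  set (fixD := fun s => rle (IZR (Dl x s k m)) (- (u / 2))).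
  set (aftD := fun s (t : nat) => indb (Z.leb bU (pos x s k - pos x s t))).
  assert (Hsplit : W x n (fun s => indb (osc_event m k x u s)) <=
     W x n (fun s => fixU s + nsum (seq m (S L)) (fun t => indb (firstb (PU x m u s) m t) * aftU s t)) +
     W x n (fun s => fixD s + nsum (seq m (S L)) (fun t => indb (firstb (PD x m u s) m t) * aftD s t))).
  { rewrite <- W_plus. apply W_le. intros s _ _. eapply Rle_trans. apply (osc_split x m k u s Hu). fold L.
    apply Rplus_le_compat.
    - apply first_bound.
      + unfold fixU, indb; destruct Z.leb; lra.
      + intros t; unfold aftU, rle; destruct Rle_dec; lra.
      + intros Hf t Ht. unfold fixU in Hf. destruct (Z.leb_spec bU (Dl x s k m)); unfold indb in Hf; [lra|].
        unfold PU in Ht. destruct Rlt_dec as [Hr|]; [|discriminate].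
        assert (IZR (Dl x s k m) <= u / 2). { destruct (Rle_dec (IZR (Dl x s k m)) (u/2)); auto.
          exfalso. assert (bU <= Dl x s k m)%Z by (apply up_ge; lra). lia. }
        unfold aftU, rle. destruct Rle_dec as [|Hn]; [lra|]. exfalso. apply Hn.
        unfold Dl in *. replace (pos x s k - pos x s t)%Z with ((pos x s k - pos x s m) - (pos x s t - pos x s m))%Z by lia.
        rewrite minus_IZR. lra.
      + unfold fixU, indb; destruct Z.leb; lra.
    - apply first_bound.
      + unfold fixD, rle; destruct Rle_dec; lra.
      + intros t; unfold aftD, indb; destruct Z.leb; lra.
      + intros Hf t Ht. unfold fixD, rle in Hf. destruct Rle_dec as [|Hn]; [lra|].
        unfold PD in Ht. destruct Rlt_dec as [Hr|]; [|discriminate].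
        unfold aftD. assert (bU <= pos x s k - pos x s t)%Z; [|destruct (Z.leb_spec bU (pos x s k - pos x s t)); unfold indb; lia || lra].
        apply up_ge. unfold Dl in *. replace (pos x s k - pos x s t)%Z with ((pos x s k - pos x s m) - (pos x s t - pos x s m))%Z by lia.
        rewrite minus_IZR. lra.
      + unfold fixD, rle; destruct Rle_dec; lra. }
  assert (HseqI : forall t, In t (seq m (S L)) -> (m <= t <= k)%nat) by (intros t Ht; apply in_seq in Ht; unfold L in Ht; lia).
  assert (Ha : W x n fixU <= 10 * eU * Tot).
  { apply (markov_bound x n m (10 * eU) (fun q => indb (Z.leb bU (psum (firstn L q)))) (fun _ => 1)); try lia; try lra; try (intros; lra).
    - intros y. apply Fup; [unfold L; lia|auto].
    - intros p q Hl. unfold fixU, Dl. rewrite (pos_diff x p q m k Hl) by lia. rewrite Rmult_1_l; reflexivity. }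
  assert (Hc : W x n fixD <= eD * Tot).
  { apply (markov_bound x n m eD (fun q => rle (IZR (psum (firstn L q))) (- (u / 2))) (fun _ => 1)); try lia; try lra; try (intros; lra).
    - intros y. apply Fdown; [unfold L; lia|lra].
    - intros p q Hl. unfold fixD, Dl. rewrite (pos_diff x p q m k Hl) by lia. rewrite Rmult_1_l; reflexivity. }
  assert (Hb : W x n (fun s => nsum (seq m (S L)) (fun t => indb (firstb (PU x m u s) m t) * aftU s t)) <= eD * Tot).
  { apply sum_after; auto. intros t Ht. apply HseqI in Ht.
    apply (after_bound x n m k t (PU x m u) eD (fun q => rle (IZR (psum (firstn (k - t) q))) (- (u / 2)))); auto; try lia.
    - intros p q i Hl Hi. apply (PU_app x m u p q t i); lia.
    - intros y. destruct (Nat.eq_dec t k).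
      + subst t. rewrite Nat.sub_diag. simpl firstn. unfold rle. destruct Rle_dec as [Hr|]; [simpl in Hr; lra|].
        rewrite W_zero. pose proof (W_nonneg y (n - k) (fun _ => 1) ltac:(intros; lra)). nra.
      + eapply Rle_trans. apply Fdown; [lia|lra]. apply Rmult_le_compat_r.
        apply W_nonneg; intros; lra. apply exp_L_mono; [unfold L; lia|nra|lra].
    - intros p q Hl. unfold aftU. rewrite pos_diff by (auto; lia). reflexivity. }
  assert (Hd : W x n (fun s => nsum (seq m (S L)) (fun t => indb (firstb (PD x m u s) m t) * aftD s t)) <= 10 * eU * Tot).
  { apply sum_after; [lra|]. intros t Ht. apply HseqI in Ht.
    apply (after_bound x n m k t (PD x m u) (10 * eU) (fun q => indb (Z.leb bU (psum (firstn (k - t) q))))); auto; try lia; try lra.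
    - intros p q i Hl Hi. apply (PD_app x m u p q t i); lia.
    - intros y. destruct (Nat.eq_dec t k).
      + subst t. rewrite Nat.sub_diag. simpl firstn. simpl psum. destruct (Z.leb_spec bU 0); [lia|].
        unfold indb. rewrite W_zero. pose proof (W_nonneg y (n - k) (fun _ => 1) ltac:(intros; lra)). nra.
      + eapply Rle_trans. apply Fup; [lia|auto]. apply Rmult_le_compat_r.
        apply W_nonneg; intros; lra. apply Rmult_le_compat_l; [lra|]. apply exp_L_mono; [unfold L; lia|nra|lra].
    - intros p q Hl. unfold aftD. rewrite pos_diff by (auto; lia). reflexivity. }
  rewrite !W_plus in Hsplit.
  rewrite Pn_eq. fold Tot. unfold Rdiv. apply (Rmult_le_reg_r Tot); [lra|].
  rewrite Rmult_assoc, Rinv_l by lra. rewrite Rmult_1_r. fold L E.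
  assert (0 <= Tot) by lra. nra.
Qed.


Theorem theoremA8 :
  exists C c : R, 0 < C /\ 0 < c /\
    forall (x : Z) (m k n : nat) (u : R),
      (0 <= x)%Z -> (m < k)%nat -> (k <= n)%nat -> 0 < u ->
      Pn x n (osc_event m k x u) <= C * exp (- (c * u ^ 2) / INR (k - m)).
Proof.
  exists 22, (1/128). split; [lra|]. split; [lra|].
  intros x m k n u Hx Hmk Hkn Hu.
  replace (- (1 / 128 * u ^ 2) / INR (k - m)) with (- (u * u) / (128 * INR (k - m))).
  - apply main_bound; auto.
  - assert (0 < INR (k - m)) by (apply lt_0_INR; lia). field. lra.
Qed.
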